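(* In the odd setting below, assume $N_k$ is invertible and let $c_k^0,\dots,c_k^{2s}$ be the $n\times n$ blocks of the unique $mn\times n$ matrix $C_k=(c_k^0;\dots;c_k^{2s})$ with $N_kC_k=F^{(k)}_{2s+1}$. Then each $c_k^i$ is homogeneous with respect to the scaling, with $\deg c_k^{2\ell}=\ell/s$ ($\ell=0,\dots,s$) and $\deg c_k^{2\ell+1}=-1+\ell/s$ ($\ell=0,\dots,s-1$); that is, $c_k^i$ has the same degree as $a_k^i$.
   Context: Odd setting: integers $n\ge1$, $s\ge1$, $m=2s+1$; $a_k^0,\dots,a_k^{2s}$ are $n\times n$ matrices with indeterminate entries, $N$-periodic in $k$. $Q_k$ is the $mn\times mn$ block matrix with $I_n$ in blocks $(i+1,i)$, last block column $(a_k^0;\dots;a_k^{2s})$, $O_n$ elsewhere. $r_k=(a_k^0;O_n;a_k^2;O_n;\dots;O_n;a_k^{2s})$. $F^{(k)}_0=r_k$, $F^{(k)}_\ell=Q_k\cdots Q_{k+\ell-1}r_{k+\ell}$, $N_k=(F^{(k)}_0,\dots,F^{(k)}_{2s})$. The scaling, for $\mu>0$: $a^{2r+1}\mapsto\mu^{-1+r/s}a^{2r+1}$ ($r=0,\dots,s-1$), $a^{2r}\mapsto\mu^{r/s}a^{2r}$ ($r=0,\dots,s$), applied for every index $k$; a rational function is homogeneous of degree $d$ if the scaling multiplies it by $\mu^d$, and a matrix is homogeneous of degree $d$ if all its entries are. *)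

(* Defs.v *)
From HB Require Import structures.
From mathcomp Require Import all_boot all_order all_algebra.
Set Implicit Arguments. Unset Strict Implicit. Unset Printing Implicit Defensive.
Import Order.TTheory GRing.Theory Num.Theory.
Local Open Scope ring_scope.

Section Odd.
Variables (K : fieldType) (n s : nat).
Notation m := (2 * s + 1)%N.
Notation bd := (\sum_(i < m) n)%N.

(* a k i = a_k^i, the n x n matrices (k : index, i : 'I_m) *)
Definition Qmat (a : nat -> 'I_m -> 'M[K]_n) (k : nat) : 'M[K]_bd :=
  \mxblock_(i < m, j < m)
    (if (j == m.-1 :> nat) then a k i
     else if (i == j.+1 :> nat) then (1%:M : 'M[K]_n) else 0).

Definition rvec (a : nat -> 'I_m -> 'M[K]_n) (k : nat) : 'M[K]_(bd, n) :=
  \mxcol_(i < m) (if odd i then 0 else a k i).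

Fixpoint QP (a : nat -> 'I_m -> 'M[K]_n) (k l : nat) : 'M[K]_bd :=
  match l with
  | 0 => 1%:M
  | l'.+1 => Qmat a k *m QP a k.+1 l'
  end.

Definition Fvec (a : nat -> 'I_m -> 'M[K]_n) (k l : nat) : 'M[K]_(bd, n) :=
  QP a k l *m rvec a (k + l).

Definition Nmat (a : nat -> 'I_m -> 'M[K]_n) (k : nat) : 'M[K]_bd :=
  \mxrow_(j < m) Fvec a k j.

Definition Cvec (a : nat -> 'I_m -> 'M[K]_n) (k : nat) : 'M[K]_(bd, n) :=
  invmx (Nmat a k) *m Fvec a k m.

Definition cblock (a : nat -> 'I_m -> 'M[K]_n) (k : nat) (i : 'I_m) : 'M[K]_n :=
  submxcol (Cvec a k) i.

End Odd.

(* Degree of a^i measured in lambda, where mu = lambda^s: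
   a^{2r} has mu-degree r/s, i.e. lambda-degree r;
   a^{2r+1} has mu-degree -1 + r/s, i.e. lambda-degree r - s. *)
Definition ldeg (s i : nat) : int :=
  if odd i then (i./2)%:Z - s%:Z else (i./2)%:Z.

Definition scale (K : fieldType) (n s : nat) (lam : K)
  (a : nat -> 'I_(2 * s + 1) -> 'M[K]_n) : nat -> 'I_(2 * s + 1) -> 'M[K]_n :=
  fun k i => lam ^ (ldeg s i) *: a k i.

(* Main.v *)
Require Import Defs.
From HB Require Import structures.
From mathcomp Require Import all_boot all_order all_algebra.
From mathcomp Require Import ring lra.
Import GRing.Theory.
Local Open Scope ring_scope.
Set Implicit Arguments. Unset Strict Implicit. Unset Printing Implicit Defensive.

Section Dev.
Variables (K : fieldType) (n s : nat).
Notation m := (2 * s + 1)%N.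
Notation bd := (\sum_(i < m) n)%N.
Notation blk X i := (@submxcol _ _ (fun _ : 'I_m => n) _ X i).
Implicit Types (a : nat -> 'I_m -> 'M[K]_n) (X : 'M[K]_(bd, n)) (k : nat).

Definition lastI : 'I_m := @Ordinal m (2 * s) (ltac:(by rewrite addn1)).

Lemma lastI_val : (lastI : nat) = m.-1. Proof. by rewrite /= addn1. Qed.

Lemma blk_mxblock (B : 'I_m -> 'I_m -> 'M[K]_n) (X : 'M[K]_(bd, n)) i :
  blk (\mxblock_(i, j) B i j *m X) i = \sum_j B i j *m blk X j.
Proof. by rewrite -[X in _ *m X]submxcolK mul_mxblock_mxrow mxcolK. Qed.

Lemma blk_mxrow (F : 'I_m -> 'M[K]_(bd, n)) (v : 'I_m -> 'M[K]_n) i :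
  blk (\mxrow_j F j *m \mxcol_j v j) i = \sum_j blk (F j) i *m v j.
Proof. by rewrite mul_mxrow_mxcol submxcol_sum; apply: eq_bigr => j _; rewrite submxcol_mul. Qed.

Lemma blk_mxrow2 (F : 'I_m -> 'M[K]_(bd, n)) (X : 'M[K]_(bd, n)) i :
  blk (\mxrow_j F j *m X) i = \sum_j blk (F j) i *m blk X j.
Proof. by rewrite -[X in _ *m X]submxcolK blk_mxrow. Qed.

Lemma blkD (X Y : 'M[K]_(bd, n)) i : blk (X + Y) i = blk X i + blk Y i.
Proof. exact: submxcolD. Qed.

Lemma blkM (X : 'M[K]_(bd, n)) (c : 'M[K]_n) i : blk (X *m c) i = blk X i *m c.
Proof. by rewrite submxcol_mul. Qed.

Definition Emx : 'M[K]_(n, bd) := \mxrow_j (if j == lastI then 1%:M else 0).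

Lemma EmxE (X : 'M[K]_(bd, n)) : Emx *m X = blk X lastI.
Proof.
rewrite -[X in _ *m X]submxcolK mul_mxrow_mxcol (bigD1 lastI) //= eqxx mul1mx.
rewrite big1 ?addr0 // => j /negbTE ->; by rewrite mul0mx.
Qed.


Definition prevb (X : 'M[K]_(bd, n)) (i : 'I_m) : 'M[K]_n :=
  \sum_(j < m) (if (i == j.+1 :> nat) then blk X j else 0).

Lemma prevP (X : 'M[K]_(bd, n)) (i : 'I_m) : ((i : nat) = 0%N /\ prevb X i = 0) \/
  exists j : 'I_m, (i : nat) = j.+1 /\ prevb X i = blk X j.
Proof.
rewrite /prevb; case: i => [[|i'] Hi] /=.
  by left; split => //; rewrite big1 // => j _.
right; have Hj : (i' < m)%N by apply: ltnW.
exists (Ordinal Hj); split => //.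
rewrite (bigD1 (Ordinal Hj)) //= eqxx big1 ?addr0 // => j Hne.
case: eqP => // [[Heq]]; case/eqP: Hne; apply: val_inj => /=; by rewrite Heq.
Qed.

Lemma blk_comp (A : 'I_m -> 'M[K]_n) (X : 'M[K]_(bd, n)) i :
  blk (\mxblock_(i < m, j < m) (if (j == m.-1 :> nat) then A i
     else if (i == j.+1 :> nat) then (1%:M : 'M[K]_n) else 0) *m X) i
  = A i *m blk X lastI + prevb X i.
Proof.
rewrite blk_mxblock (bigD1 lastI) //=.
have -> : ((2 * s)%N == m.-1) = true by rewrite addn1 /= eqxx.
congr (_ + _).
rewrite /prevb [RHS](bigD1 lastI) //=.
have -> : (i == (2 * s).+1 :> nat) = false.
  by apply/negbTE; apply: contraTneq (ltn_ord i) => ->; rewrite addn1 ltnn.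
rewrite add0r; apply: eq_bigr => j Hj.
have -> : (j == m.-1 :> nat) = false by rewrite -lastI_val; apply/negbTE.
by case: ifP; rewrite ?mul1mx ?mul0mx.
Qed.

Definition Qo (a : nat -> 'I_m -> 'M[K]_n) (k : nat) : 'M[K]_bd :=
  \mxblock_(i < m, j < m)
    (if (j == m.-1 :> nat) then (if odd i then a k i else 0)
     else if (i == j.+1 :> nat) then (1%:M : 'M[K]_n) else 0).

Lemma blk_Qmat a k X i : blk (Qmat a k *m X) i = a k i *m blk X lastI + prevb X i.
Proof. exact: blk_comp. Qed.

Lemma blk_Qo a k X i :
  blk (Qo a k *m X) i = (if odd i then a k i else 0) *m blk X lastI + prevb X i.
Proof. exact: (@blk_comp (fun i : 'I_m => if odd i then a k i else 0)). Qed.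

Lemma blk_rvec a k i : blk (rvec a k) i = if odd i then 0 else a k i.
Proof. by rewrite /rvec mxcolK. Qed.

Lemma Qmat_split a k X :
  Qmat a k *m X = Qo a k *m X + rvec a k *m (Emx *m X).
Proof.
apply/mxcolP => i; rewrite blkD blk_Qmat blk_Qo blkM blk_rvec EmxE.
case: (odd i); rewrite ?mul0mx ?add0r ?addr0 //.
by rewrite addrC.
Qed.


Fixpoint QoP a k l : 'M[K]_bd :=
  match l with
  | 0 => 1%:M
  | l'.+1 => Qo a k *m QoP a k.+1 l'
  end.

Definition Gvec a k l : 'M[K]_(bd, n) := QoP a k l *m rvec a (k + l).

Lemma Fvec0 a k : Fvec a k 0 = rvec a k.
Proof. by rewrite /Fvec /= mul1mx addn0. Qed.

Lemma Gvec0 a k : Gvec a k 0 = rvec a k.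
Proof. by rewrite /Gvec /= mul1mx addn0. Qed.

Lemma FvecS a k l : Fvec a k l.+1 = Qmat a k *m Fvec a k.+1 l.
Proof. by rewrite /Fvec /= -mulmxA addSnnS. Qed.

Lemma GvecS a k l : Gvec a k l.+1 = Qo a k *m Gvec a k.+1 l.
Proof. by rewrite /Gvec /= -mulmxA addSnnS. Qed.

Definition hh a k (j l : nat) : 'M[K]_n :=
  if (j < l)%N then Emx *m Gvec a (k + j).+1 (l - j.+1) else 0.

Lemma decompF a l k :
  Fvec a k l = Gvec a k l + \sum_(j < l) Fvec a k j *m hh a k j l.
Proof.
elim: l k => [|l IH] k; first by rewrite Fvec0 Gvec0 big_ord0 addr0.
rewrite FvecS IH mulmxDr Qmat_split -GvecS mulmx_sumr big_ord_recl /=.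
rewrite -Fvec0 -addrA; congr (_ + (_ + _)).
  by rewrite /hh /= addn0 subSS subn0.
apply: eq_bigr => j _; rewrite mulmxA -FvecS; congr (_ *m _).
by rewrite /hh /= ltnS subSS addSnnS.
Qed.


Lemma prevP2 (i : 'I_m) : ((i : nat) = 0%N /\ forall X, prevb X i = 0) \/
  exists j : 'I_m, (i : nat) = j.+1 /\ forall X, prevb X i = blk X j.
Proof.
rewrite /prevb; case: i => [[|i'] Hi] /=.
  by left; split => // X; rewrite big1 // => j _.
right; have Hj : (i' < m)%N by apply: ltnW.
exists (Ordinal Hj); split => // X.
rewrite (bigD1 (Ordinal Hj)) //= eqxx big1 ?addr0 // => j Hne.
case: eqP => // [[Heq]]; case/eqP: Hne; apply: val_inj => /=; by rewrite Heq.
Qed.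

Lemma odd_lastI : odd lastI = false.
Proof. by rewrite /= mul2n odd_double. Qed.

Lemma Gpar a l k (i : 'I_m) : odd i != odd l -> blk (Gvec a k l) i = 0.
Proof.
elim: l k i => [|l IH] k i Hi.
  by rewrite Gvec0 blk_rvec; move: Hi; rewrite /=; case: (odd i).
rewrite GvecS blk_Qo.
have Hil : odd i = odd l by move: Hi; rewrite /=; case: (odd i); case: (odd l).
have -> : (if odd i then a k i else 0) *m blk (Gvec a k.+1 l) lastI = 0.
  case: ifP => Ho; last by rewrite mul0mx.
  by rewrite IH ?mulmx0 // odd_lastI -Hil Ho.
rewrite add0r; case: (prevP2 i) => [[_ ->]|[j [Hj ->]]] //.
by apply: IH; move: Hil; rewrite Hj /=; case: (odd j); case: (odd l).
Qed.

Definition fl (x : nat) : int := (x./2)%:Z.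

Lemma scalerE (lam : K) (x y : int) (X : 'M[K]_n) : lam != 0 ->
  lam ^ x *: (lam ^ y *: X) = lam ^ (x + y) *: X.
Proof. by move=> H; rewrite scalerA expfzDr. Qed.

Lemma halfS x : (x.+1)./2 = (odd x + x./2)%N.
Proof. exact: uphalf_half. Qed.

Lemma fl_lastI : fl lastI = s%:Z.
Proof. by rewrite /fl /= mul2n doubleK. Qed.

Lemma Gscale lam a l k (i : 'I_m) : lam != 0 ->
  blk (Gvec (scale lam a) k l) i = lam ^ (fl i - fl l) *: blk (Gvec a k l) i.
Proof.
move=> Hl; elim: l k i => [|l IH] k i.
  rewrite !Gvec0 !blk_rvec /scale /fl /= subr0.
  by case: ifP => Ho; rewrite ?scaler0 // /ldeg Ho.
rewrite !GvecS !blk_Qo IH.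
case: (prevP2 i) => [[Hi0 HP]|[j [Hj HP]]]; rewrite !HP.
  have -> : odd i = false by rewrite Hi0.
  by rewrite !mul0mx !addr0 scaler0.
rewrite IH scalerDr; congr (_ + _).
  case: ifP => Ho; last by rewrite !mul0mx scaler0.
  rewrite /scale -scalemxAl -scalemxAr scalerE //; case: (boolP (odd l)) => Hol.
    by rewrite Gpar ?mulmx0 ?scaler0 // odd_lastI Hol.
  congr (_ *: _); rewrite /ldeg Ho fl_lastI /fl halfS (negbTE Hol) /=.
  rewrite add0n; congr (_ ^ _); ring.
case: (boolP (odd j == odd l)) => Hjl; last by rewrite Gpar // !scaler0.
congr (_ *: _); congr (_ ^ _); rewrite /fl Hj !halfS (eqP Hjl).
by case: (odd l); rewrite ?add0n ?add1n -?addn1 ?PoszD; ring.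
Qed.


Definition Mmat a k : 'M[K]_bd := \mxrow_(j < m) Gvec a k j.
Definition Hmat a k : 'M[K]_bd := \mxblock_(j < m, l < m) hh a k j l.
Definition hmv a k : 'M[K]_(bd, n) := \mxcol_(j < m) hh a k j m.

Lemma sum_widen a k (l : 'I_m) :
  \sum_(j < l) Fvec a k j *m hh a k j l = \sum_(j < m) Fvec a k j *m hh a k j l.
Proof.
have Hl : (l <= m)%N by apply: ltnW.
rewrite (big_ord_widen m (fun j : nat => Fvec a k j *m hh a k j l) Hl).
rewrite (big_mkcond (fun i : 'I_m => (i < l)%N)); apply: eq_bigr => j _.
by case: ifP => // Hj; rewrite /hh Hj mulmx0.
Qed.
Lemma NMH a k : Nmat a k = Mmat a k + Nmat a k *m Hmat a k.
Proof.
apply/mxrowP => l; rewrite submxrowD /Nmat /Mmat /Hmat mul_mxrow_mxblock !mxrowK.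
by rewrite decompF sum_widen.
Qed.

Lemma Fm_dec a k : Fvec a k m = Gvec a k m + Nmat a k *m hmv a k.
Proof. by rewrite /Nmat /hmv mul_mxrow_mxcol decompF. Qed.


Lemma hh_diag a k j : hh a k j j = 0.
Proof. by rewrite /hh ltnn. Qed.

Lemma unit_IH a k : (1%:M - Hmat a k) \in unitmx.
Proof.
rewrite unitmxE -det_tr det_trig.
  rewrite big1 ?unitr1 // => i _.
  by rewrite !mxE hh_diag mxE eqxx subr0.
have -> : (1%:M - Hmat a k)^T = \mxblock_(i < m, j < m)
   ((if i == j then 1%:M else 0) - (hh a k j i)^T).
  have -> : (1%:M - Hmat a k)^T = 1%:M - (Hmat a k)^T by apply/matrixP => i j; rewrite !mxE eq_sym.
  rewrite /Hmat tr_mxblock mxblockB.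
  rewrite -(mxdiagZ (p_ := fun _ : 'I_m => n)) /mxdiag; congr (_ - _).
  by apply: eq_mxblock => i j; case: eqP => // _; rewrite conform_mx_id.
apply/is_trig_mxblockP; split => [i j Hij|i].
  by rewrite /hh ltnNge ltnW // trmx0 subr0; case: eqP Hij => [->|]; rewrite ?ltnn.
by rewrite eqxx hh_diag trmx0 subr0 scalar_mx_is_trig.
Qed.

Lemma unit_M a k : Nmat a k \in unitmx -> Mmat a k \in unitmx.
Proof.
move=> HN; have -> : Mmat a k = Nmat a k *m (1%:M - Hmat a k).
  by rewrite mulmxBr mulmx1 {1}NMH addrK.
by rewrite unitmx_mul HN unit_IH.
Qed.

Lemma M_eq a k : Mmat a k = Nmat a k *m (1%:M - Hmat a k).
Proof. by rewrite mulmxBr mulmx1 {1}NMH addrK. Qed.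

Lemma odd_m : odd m = true.
Proof. by rewrite addn1 /= mul2n odd_double. Qed.

Definition yv a k : 'M[K]_(bd, n) := invmx (Mmat a k) *m Gvec a k m.

Lemma y_even a k : Nmat a k \in unitmx ->
  forall j : 'I_m, ~~ odd j -> blk (yv a k) j = 0.
Proof.
move=> HN; have HM := unit_M HN.
set y := yv a k.
pose ye : 'M[K]_(bd, n) := \mxcol_(j < m) (if odd j then 0 else blk y j).
pose yo : 'M[K]_(bd, n) := \mxcol_(j < m) (if odd j then blk y j else 0).
have Hy : y = ye + yo.
  by apply/mxcolP => j; rewrite blkD !mxcolK; case: ifP; rewrite ?addr0 ?add0r.
have HMy : Mmat a k *m y = Gvec a k m by rewrite /y /yv mulKVmx.
have Hye : Mmat a k *m ye = 0.
  apply/mxcolP => i; rewrite submxcol0.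
  case: (boolP (odd i)) => Hi.
    rewrite /Mmat blk_mxrow big1 // => j _.
    case: ifP => Hj; first by rewrite mulmx0.
    by rewrite Gpar ?mul0mx // Hi Hj.
  have -> : Mmat a k *m ye = Gvec a k m - Mmat a k *m yo.
    by rewrite -HMy Hy mulmxDr addrK.
  rewrite /Mmat submxcolB blk_mxrow (@Gpar a m k i); last by rewrite odd_m (negbTE Hi).
  rewrite sub0r big1 ?oppr0 // => j _.
  case: ifP => Hj; last by rewrite mulmx0.
  by rewrite Gpar ?mul0mx // (negbTE Hi) Hj.
have Hye0 : ye = 0 by rewrite -(mulKmx HM ye) Hye mulmx0.
move=> j Hj; have := f_equal (fun X => blk X j) Hye0.
by rewrite /= mxcolK (negbTE Hj) submxcol0.
Qed.

Lemma C_formula a k : Nmat a k \in unitmx ->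
  Cvec a k = hmv a k + (1%:M - Hmat a k) *m yv a k.
Proof.
move=> HN; rewrite /Cvec Fm_dec.
have -> : Gvec a k m = Mmat a k *m yv a k by rewrite /yv mulKVmx // unit_M.
by rewrite M_eq -mulmxA -mulmxDr mulKmx // addrC.
Qed.

Definition dg (f : 'I_m -> K) : 'M[K]_bd := \mxdiag_(i < m) ((f i)%:M : 'M[K]_n).

Lemma dg_mul f g : dg f *m dg g = dg (fun i => f i * g i).
Proof.
rewrite /dg {2}/mxdiag mul_mxdiag_mxblock /mxdiag; apply: eq_mxblock => i j.
case: eqP => _; last by rewrite mulmx0.
by rewrite !conform_mx_id -scalar_mxM.
Qed.

Lemma dg_unit f : (forall i, f i != 0) -> dg f \in unitmx.
Proof.
move=> Hf; have H : dg f *m dg (fun i => (f i)^-1) = 1%:M.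
  rewrite dg_mul -(mxdiagZ (p_ := fun _ : 'I_m => n)); apply/eq_mxdiagP => i.
  by rewrite mulfV.
by case: (mulmx1_unit H).
Qed.

Lemma blk_dg f X i : blk (dg f *m X) i = f i *: blk X i.
Proof.
by rewrite -[X in _ *m X]submxcolK /dg mul_mxdiag_mxcol mxcolK mul_scalar_mx.
Qed.

Lemma fl_m : fl m = s%:Z.
Proof. by rewrite /fl addn1 halfS mul2n odd_double doubleK. Qed.

Section Scaled.
Variables (lam : K) (Hlam : lam != 0).

Lemma M_scale a k : Mmat (scale lam a) k =
  dg (fun i => lam ^ fl i) *m Mmat a k *m dg (fun j => lam ^ (- fl j)).
Proof.
apply/mxrowP => j; rewrite /Mmat mul_mxrow /dg mul_mxrow_mxdiag !mxrowK.
apply/mxcolP => i; rewrite Gscale // blkM mul_mx_scalar.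
have := blk_dg (fun i => lam ^ fl i) (Gvec a k j) i; rewrite /dg => ->.
by rewrite scalerA -expfzDr // addrC.
Qed.

Lemma unit_N_scale a k : Nmat a k \in unitmx -> Nmat (scale lam a) k \in unitmx.
Proof.
move=> HN; have HM : Mmat (scale lam a) k \in unitmx.
  rewrite M_scale !unitmx_mul unit_M // !dg_unit // => i; by rewrite expfz_neq0.
by move: HM; rewrite M_eq unitmx_mul => /andP[].
Qed.

Lemma y_scale a k : Nmat a k \in unitmx ->
  yv (scale lam a) k = \mxcol_(j < m) (lam ^ (ldeg s j) *: blk (yv a k) j).
Proof.
move=> HN; have HM' : Mmat (scale lam a) k \in unitmx.
  by rewrite M_eq unitmx_mul unit_N_scale // unit_IH.
apply: (canLR (mulKmx HM')); symmetry.
apply/mxcolP => i; rewrite {1}/Mmat blk_mxrow Gscale // fl_m.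
have -> : Gvec a k m = Mmat a k *m yv a k by rewrite /yv mulKVmx // unit_M.
rewrite /Mmat blk_mxrow2 scaler_sumr.
apply: eq_bigr => j _; rewrite Gscale //.
case: (boolP (odd j)) => Hj; last by rewrite y_even // !scaler0 !mulmx0 scaler0.
rewrite -scalemxAl -scalemxAr scalerA -!expfzDr //; congr (_ *: _); congr (_ ^ _).
by rewrite /ldeg Hj /fl; ring.
Qed.

Lemma hh_scale a k (j l : nat) : odd l ->
  hh (scale lam a) k j l = lam ^ (ldeg s j - ldeg s l) *: hh a k j l.
Proof.
move=> Hl; rewrite /hh; case: ifP => Hjl; last by rewrite scaler0.
rewrite !EmxE Gscale // fl_lastI.
set d := (l - j.+1)%N.
case: (boolP (odd d)) => Hd.
  by rewrite Gpar ?scaler0 // odd_lastI Hd.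
congr (_ *: _); congr (_ ^ _).
have Hld : l = (d + j.+1)%N by rewrite subnK.
have Hj : odd j = false.
  by move: Hl; rewrite Hld oddD (negbTE Hd) /=; case: (odd j).
rewrite /ldeg Hl Hj Hld halfD halfS Hj (negbTE Hd) /fl /= add0n.
by rewrite PoszD; ring.
Qed.

End Scaled.
End Dev.

Unset Implicit Arguments.

Theorem mainTheorem10 (K : fieldType) (n s N : nat) (hn : (1 <= n)%N) (hs : (1 <= s)%N)
  (hN : (1 <= N)%N) (a : nat -> 'I_(2 * s + 1) -> 'M[K]_n)
  (hper : forall k i, a (k + N)%N i = a k i)
  (k : nat) (hinv : Nmat a k \in unitmx)
  (lam : K) (hlam : lam != 0) :
  forall i : 'I_(2 * s + 1),
    cblock (scale lam a) k i = lam ^ (ldeg s i) *: cblock a k i.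
Proof.
move=> i; rewrite /cblock (C_formula (unit_N_scale hlam hinv)) (C_formula hinv).
rewrite (y_scale hlam hinv) !submxcolD !mulmxBl !mul1mx !submxcolB /Hmat !blk_mxblock.
rewrite /hmv !mxcolK hh_scale ?odd_m //.
have -> : ldeg s (2 * s + 1) = 0.
  by rewrite /ldeg odd_m addn1 halfS mul2n odd_double doubleK subrr.
rewrite subr0 scalerDr scalerBr scaler_sumr; congr (_ + (_ - _)).
apply: eq_bigr => l _; rewrite mxcolK.
case: (boolP (odd l)) => Hl; last first.
  by rewrite (y_even hinv) ?scaler0 ?mulmx0 // scaler0.
rewrite hh_scale // -scalemxAl -scalemxAr scalerA -expfzDr // subrK.
reflexivity.
Qed.
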